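(* Let $\mathrm{M}$ be a loopless matroid on a finite set $E$, $\mathcal{G}$ a building set of its lattice of flats $\mathcal{L}$, $\mathcal{M}$ an atom-free $\mathcal{G}$-compatible modular cut of $\mathcal{L}$, and $e\notin E$. Then \[ \mathrm{Tr}_{\mathcal{M}}(\mathcal{G})=(\mathcal{G}\cup_{\mathcal{M}}e)/e. \] In particular, $\mathrm{Tr}_{\mathcal{M}}(\mathcal{G})$ is a building set of $\mathrm{Tr}_{\mathcal{M}}(\mathrm{M})$.
   Context: Flats ordered by inclusion, $\hat0=\varnothing$, $F\vee G=\operatorname{cl}(F\cup G)$. A building set of a geometric lattice $\mathcal{L}$ is $\mathcal{G}\subseteq\mathcal{L}\setminus\{\hat0\}$ such that for each $F\neq\hat0$ the join map $\prod_{G\in\max\mathcal{G}_{\leqslant F}}[\hat0,G]\to[\hat0,F]$ is a poset isomorphism. A modular cut is an upward-closed set $\mathcal{M}$ of flats with $F\cap G\in\mathcal{M}$ whenever $F,G\in\mathcal{M}$ satisfy $\operatorname{rk}(F\vee G)+\operatorname{rk}(F\cap G)=\operatorname{rk}F+\operatorname{rk}G$; atom-free means it contains no rank-one flat; $\mathcal{G}$-compatible means its minimal elements lie in $\mathcal{G}$. The extension $\mathrm{M}\cup_{\mathcal{M}}e$ on $E\sqcup\{e\}$ has rank $\operatorname{rk}(S)=\operatorname{rk}_{\mathrm{M}}(S)$ and $\operatorname{rk}(S\sqcup\{e\})=\operatorname{rk}_{\mathrm{M}}(S)$ if $\operatorname{cl}_{\mathrm{M}}(S)\in\mathcal{M}$,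 else $\operatorname{rk}_{\mathrm{M}}(S)+1$ ($S\subseteq E$); $\mathcal{G}\cup_{\mathcal{M}}e=\{\operatorname{cl}_{\mathrm{M}\cup_{\mathcal{M}}e}(G):G\in\mathcal{G}\}\sqcup\{\{e\}\}$. The truncation $\mathrm{Tr}_{\mathcal{M}}(\mathrm{M})$ is the matroid on $E$ with rank $\operatorname{rk}_{\mathrm{M}}(S)-1$ if $\operatorname{cl}_{\mathrm{M}}(S)\in\mathcal{M}$ and $\operatorname{rk}_{\mathrm{M}}(S)$ otherwise; it equals the contraction $(\mathrm{M}\cup_{\mathcal{M}}e)/e$, whose flats are the sets $H\setminus\{e\}$ for flats $H\ni e$ of $\mathrm{M}\cup_{\mathcal{M}}e$. $\mathrm{Tr}_{\mathcal{M}}(\mathcal{G})=\mathcal{G}\cap\mathcal{L}(\mathrm{Tr}_{\mathcal{M}}(\mathrm{M}))$. For a building set $\mathcal{G}'$ of $\mathrm{M}\cup_{\mathcal{M}}e$, the contraction is $\mathcal{G}'/e=\{H\setminus\{e\}: H=\operatorname{cl}(G\cup\{e\})\text{ for some }G\in\mathcal{G}',\ H\neq\operatorname{cl}(\{e\})\}$, viewed as a set of flats of $(\mathrm{M}\cup_{\mathcal{M}}e)/e=\mathrm{Tr}_{\mathcal{M}}(\mathrm{M})$. *)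

(* Defs.v *)
From mathcomp Require Import all_boot.
Set Implicit Arguments. Unset Strict Implicit. Unset Printing Implicit Defensive.

Definition cl (T : finType) (r : {set T} -> nat) (A : {set T}) : {set T} :=
  [set x | r (x |: A) == r A].

Definition flat (T : finType) (r : {set T} -> nat) (F : {set T}) : bool :=
  cl r F == F.

Section Matroids.
Variable E : finType.
Implicit Types (r : {set E} -> nat) (A B F G H : {set E}) (Gs M : {set {set E}}).

(* Rank-function axioms of a matroid on the ground set E (all of the finType). *)
Definition matroid_rank r : Prop :=
  [/\ forall A, r A <= #|A|,
      forall A B, A \subset B -> r A <= r B &
      forall A B, r (A :|: B) + r (A :&: B) <= r A + r B].

Definition loopless r : Prop := forall x : E, r [set x] = 1.


Definition maxbelow Gs F : {set {set E}} :=
  [set G in Gs | (G \subset F) &&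
     [forall G' in Gs, (G' \subset F) ==> ~~ (G \proper G')]].

Definition family_in r (Mx : {set {set E}}) (h : {set E} -> {set E}) : Prop :=
  forall G, G \in Mx -> flat r (h G) /\ h G \subset G.

Definition family_join r (Mx : {set {set E}}) (h : {set E} -> {set E}) : {set E} :=
  cl r (\bigcup_(G in Mx) h G).

(* Building set of the lattice of flats (bottom = cl set0 = set0 for loopless M):
   for every flat F <> bottom, the join map from the product of the intervals
   [bottom, G], G maximal in Gs below F, to [bottom, F] is a poset isomorphism
   (surjective and an order embedding). *)
Definition building_set r Gs : Prop :=
  (forall G, G \in Gs -> flat r G /\ G != cl r set0) /\
  forall F, flat r F -> F != cl r set0 ->
    let Mx := maxbelow Gs F in
    (forall h, family_in r Mx h -> family_join r Mx h \subset F) /\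
    (forall H, flat r H -> H \subset F ->
        exists h, family_in r Mx h /\ family_join r Mx h = H) /\
    (forall h h', family_in r Mx h -> family_in r Mx h' ->
        (family_join r Mx h \subset family_join r Mx h' <->
         forall G, G \in Mx -> h G \subset h' G)).

Definition modular_cut r M : Prop :=
  [/\ forall F, F \in M -> flat r F,
      forall F G, F \in M -> flat r G -> F \subset G -> G \in M &
      forall F G, F \in M -> G \in M ->
        r (cl r (F :|: G)) + r (F :&: G) = r F + r G -> F :&: G \in M].

Definition atom_free r M : Prop := forall F, F \in M -> r F != 1.

Definition compatible Gs M : Prop :=
  forall F, F \in M -> [forall G in M, ~~ (G \proper F)] -> F \in Gs.

Definition trunc r M (S : {set E}) : nat := r S - (cl r S \in M).

Definition trunc_set r M Gs : {set {set E}} := [set G in Gs | flat (trunc r M) G].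

(* Principal extension M ∪_M e on option E; None plays the role of e. *)
Definition ext r M (S : {set option E}) : nat :=
  let S' := [set x | Some x \in S] in
  r S' + ((None \in S) && (cl r S' \notin M)).

Definition ext_set r M Gs : {set {set option E}} :=
  [set cl (ext r M) (Some @: G) | G : {set E} in Gs] :|: [set [set None]].

(* Contraction G'/e of a building set of the extension, as sets of flats of
   (M ∪_M e)/e = Tr_M(M), i.e. subsets of E. *)
Definition contr_set (r' : {set option E} -> nat) (Gs' : {set {set option E}})
  : {set {set E}} :=
  [set [set x | Some x \in H] | H : {set option E} in
     [set cl r' (None |: G) | G : {set option E} in Gs'] & H != cl r' [set None]].

End Matroids.

(* Main.v *)
Require Import Defs.
From mathcomp Require Import all_boot zify.
Set Implicit Arguments. Unset Strict Implicit. Unset Printing Implicit Defensive.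

Ltac setdec := apply/setP => ?; rewrite !inE; do ?case: (_ == _); do ?case: (_ \in _).

Section Gen.
Variable T : finType.
Variable rho : {set T} -> nat.
Hypothesis hr : matroid_rank rho.
Implicit Types (A B X Y : {set T}) (x y : T).

Lemma rk_card A : rho A <= #|A|. Proof. by case: hr. Qed.
Lemma rk_mono A B : A \subset B -> rho A <= rho B. Proof. by case: hr => _ h _; apply: h. Qed.
Lemma rk_sub A B : rho (A :|: B) + rho (A :&: B) <= rho A + rho B. Proof. by case: hr. Qed.
Lemma rk0 : rho set0 = 0.
Proof. by apply/eqP; rewrite -leqn0 -(cards0 T); apply: rk_card. Qed.

Lemma rk_add1 A x : rho (x |: A) <= (rho A).+1.
Proof.
have h1 := rk_sub [set x] A.
have h2 : rho [set x] <= 1 by rewrite -(cards1 x); apply: rk_card.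
have := leq_trans (leq_addr (rho ([set x] :&: A)) _) h1.
move=> h3; apply: leq_trans h3 _; by rewrite addnC -addn1 leq_add2l.
Qed.

Lemma in_cl A x : (x \in cl rho A) = (rho (x |: A) == rho A).
Proof. by rewrite /cl inE. Qed.

Lemma subset_cl A : A \subset cl rho A.
Proof. by apply/subsetP => x xA; rewrite in_cl (setUidPr (_ : [set x] \subset A)) ?sub1set. Qed.

Lemma rk_clU A X : X \subset cl rho A -> rho (A :|: X) = rho A.
Proof.
move: {2}#|X| (erefl #|X|) => n; elim: n X => [|n IH] X hX sX.
  by move/eqP: hX; rewrite cards_eq0 => /eqP ->; rewrite setU0.
have [x xX] : exists x, x \in X.
  by apply/set0Pn; rewrite -cards_eq0 hX.
have hX' : #|X :\ x| = n by rewrite (cardsD1 x X) xX add1n in hX; case: hX.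
have sX' : X :\ x \subset cl rho A by apply: subset_trans sX; apply: subsetDl.
have IHx := IH _ hX' sX'.
have xc : rho (x |: A) = rho A by apply/eqP; rewrite -in_cl (subsetP sX).
have e1 : A :|: X = (A :|: X :\ x) :|: (x |: A).
  by rewrite -{1}(setD1K xX); setdec.
have e2 : A \subset (A :|: X :\ x) :&: (x |: A).
  by rewrite subsetI subsetUl subsetUr.
apply/eqP; rewrite eqn_leq; apply/andP; split; last by apply: rk_mono; apply: subsetUl.
have := rk_sub (A :|: X :\ x) (x |: A); rewrite -e1 IHx xc.
have := rk_mono e2. move=> h h'.
have := leq_trans (leq_add (leqnn (rho (A :|: X))) h) h'.
by rewrite leq_add2r.
Qed.

Lemma rk_cl A : rho (cl rho A) = rho A.
Proof.
have e : A :|: cl rho A = cl rho A by apply/setUidPr; apply: subset_cl.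
by rewrite -{1}e rk_clU.
Qed.

Lemma rk_le1 A x : rho A <= rho (x |: A).
Proof. by apply: rk_mono; apply: subsetU1. Qed.

Lemma cl_mono A B : A \subset B -> cl rho A \subset cl rho B.
Proof.
move=> sAB; apply/subsetP => x; rewrite !in_cl => /eqP hx.
have := rk_sub B (x |: A).
have e1 : B :|: (x |: A) = x |: B.
  apply/setP => y; rewrite !inE; case: (y == x) => //=; rewrite ?orbT //.
  by case yB: (y \in B) => //=; apply/negP => yA; move: yB; rewrite (subsetP sAB).
have e2 : A \subset B :&: (x |: A) by rewrite subsetI sAB subsetU1.
rewrite e1 hx => h.
have := leq_trans (leq_add (leqnn (rho (x |: B))) (rk_mono e2)) h.
rewrite leq_add2r => h'; by rewrite eqn_leq h' rk_le1.
Qed.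

Lemma rk_eq_sub A B : A \subset B -> rho A = rho B -> B \subset cl rho A.
Proof.
move=> sAB e; apply/subsetP => y yB; rewrite in_cl eqn_leq rk_le1 andbT e.
by apply: rk_mono; rewrite subUset sub1set yB sAB.
Qed.

Lemma cl_idem A : cl rho (cl rho A) = cl rho A.
Proof.
apply/eqP; rewrite eqEsubset subset_cl andbT; apply/subsetP => x.
rewrite !in_cl rk_cl => /eqP h; rewrite eqn_leq rk_le1 andbT -h.
by apply: rk_mono; apply: setUS; apply: subset_cl.
Qed.

Lemma flatE F : flat rho F -> cl rho F = F.
Proof. by move/eqP. Qed.

Lemma flat_cl A : flat rho (cl rho A).
Proof. by apply/eqP; apply: cl_idem. Qed.

Lemma flat_I F G : flat rho F -> flat rho G -> flat rho (F :&: G).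
Proof.
move=> fF fG; apply/eqP/eqP; rewrite eqEsubset subset_cl andbT.
rewrite subsetI; apply/andP; split.
  by rewrite -{2}(flatE fF); apply: cl_mono; apply: subsetIl.
by rewrite -{2}(flatE fG); apply: cl_mono; apply: subsetIr.
Qed.

Lemma flat_add F x : flat rho F -> x \notin F -> rho (x |: F) = (rho F).+1.
Proof.
move=> fF xF; apply/eqP; rewrite eqn_leq rk_add1 /=.
rewrite ltn_neqAle rk_le1 andbT eq_sym.
by move: xF; rewrite -{1}(flatE fF) in_cl.
Qed.

Lemma cl_sandwich A B : A \subset B -> B \subset cl rho A -> cl rho B = cl rho A.
Proof.
move=> s1 s2; apply/eqP; rewrite eqEsubset (cl_mono s1) andbT.
by apply: subset_trans (cl_mono s2) _; rewrite cl_idem.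
Qed.

Lemma in_flat_cl F A : flat rho F -> A \subset F -> cl rho A \subset F.
Proof. by move=> fF sAF; rewrite -(flatE fF); apply: cl_mono. Qed.

End Gen.

Lemma cl0_loopless (T : finType) (rho : {set T} -> nat) :
  matroid_rank rho -> loopless rho -> cl rho set0 = set0.
Proof.
move=> hr hl; apply/setP => x; rewrite in_cl inE setU0 hl rk0 //.
Qed.

Section Trunc.
Variable E : finType.
Variable r : {set E} -> nat.
Hypothesis hr : matroid_rank r.
Hypothesis hl : loopless r.
Variable M : {set {set E}}.
Hypothesis hM : modular_cut r M.
Hypothesis haf : atom_free r M.
Hypothesis hM0 : set0 \notin M.
Implicit Types (A B X Y F G H K : {set E}) (x y : E).

Lemma M_up F G : F \in M -> flat r G -> F \subset G -> G \in M.
Proof. by case: hM => _ h _; apply: h. Qed.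
Lemma M_flat F : F \in M -> flat r F.
Proof. by case: hM => h _ _; apply: h. Qed.
Lemma M_mod F G : F \in M -> G \in M ->
  r (cl r (F :|: G)) + r (F :&: G) = r F + r G -> F :&: G \in M.
Proof. by case: hM => _ _ h; apply: h. Qed.

Notation tr := (trunc r M).

Lemma trE S : tr S + (cl r S \in M) = r S.
Proof.
rewrite /trunc; case hS: (cl r S \in M) => /=; last by rewrite subn0 addn0.
rewrite addn1 subn1 prednK // lt0n; apply/negP => /eqP h0.
have : cl r S != set0 by apply: contraNneq hM0 => <-.
case/set0Pn => x xS.
have := rk_mono hr (_ : [set x] \subset cl r S); rewrite sub1set xS rk_cl // h0 hl.
by move/(_ isT).
Qed.

Lemma cl_eq_rk A B : A \subset B -> r A = r B -> cl r A = cl r B.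
Proof.
move=> sAB e; apply/eqP; rewrite eqEsubset cl_mono //=.
by rewrite -(cl_idem hr A); apply: cl_mono => //; apply: rk_eq_sub.
Qed.

Lemma tr_matroid : matroid_rank tr.
Proof.
split.
- move=> A; apply: leq_trans (rk_card hr A); rewrite /trunc; apply: leq_subr.
- move=> A B sAB; have hA := trE A; have hB := trE B.
  have hAB := rk_mono hr sAB.
  case bA: (cl r A \in M); case bB: (cl r B \in M); rewrite bA bB /= in hA hB; try lia.
  case: (ltngtP (r A) (r B)) => eAB; try lia.
  by move: bA; rewrite (cl_eq_rk sAB eAB) bB.
- move=> A B.
  have hA := trE A; have hB := trE B; have hU := trE (A :|: B); have hI := trE (A :&: B).
  have hs := rk_sub hr A B.
  case bA: (cl r A \in M); case bB: (cl r B \in M); rewrite bA bB /= in hA hB.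
  + have bU : cl r (A :|: B) \in M.
      by apply: (M_up bA (flat_cl hr _)); apply: cl_mono => //; apply: subsetUl.
    rewrite bU /= in hU.
    case bI: (cl r (A :&: B) \in M); rewrite bI /= in hI; first lia.
    case: (ltngtP (r (A :|: B) + r (A :&: B)) (r A + r B)) hs => // eq _; first lia.
    suff : cl r (A :&: B) \in M by rewrite bI.
    set F := cl r A; set G := cl r B.
    have eU : cl r (F :|: G) = cl r (A :|: B).
      apply: cl_sandwich => //; first by apply: setUSS; apply: subset_cl.
      by rewrite subUset; apply/andP; split; apply: cl_mono => //; rewrite ?subsetUl ?subsetUr.
    have sI : A :&: B \subset F :&: G by apply: setISS; apply: subset_cl.
    have hs2 := rk_sub hr F G.
    have eFG : r (F :|: G) = r (A :|: B) by rewrite -(rk_cl hr (F :|: G)) eU rk_cl.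
    have rI := rk_mono hr sI.
    have rF : r F = r A by rewrite /F rk_cl.
    have rG : r G = r B by rewrite /G rk_cl.
    have eI : r (F :&: G) = r (A :&: B) by lia.
    have FGM : F :&: G \in M.
      apply: M_mod => //; by rewrite eU rk_cl // eI rF rG eq.
    have -> : cl r (A :&: B) = F :&: G.
      apply/eqP; rewrite eqEsubset; apply/andP; split.
        by apply: in_flat_cl => //; apply: (flat_I hr (flat_cl hr _) (flat_cl hr _)).
      by apply: rk_eq_sub => //; rewrite eI.
    done.
  + have bU : cl r (A :|: B) \in M.
      by apply: (M_up bA (flat_cl hr _)); apply: cl_mono => //; apply: subsetUl.
    rewrite bU /= in hU; lia.
  + have bU : cl r (A :|: B) \in M.
      by apply: (M_up bB (flat_cl hr _)); apply: cl_mono => //; apply: subsetUr.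
    rewrite bU /= in hU; lia.
  + lia.
Qed.

Lemma tr_le_r S : tr S <= r S.
Proof. rewrite /trunc; apply: leq_subr. Qed.

Lemma tr_loopless : loopless tr.
Proof.
move=> x; have := trE [set x]; rewrite hl.
case b: (cl r [set x] \in M); last by rewrite addn0.
by move: (haf b); rewrite rk_cl // hl.
Qed.

Lemma cl_tr0 : cl tr set0 = set0.
Proof. exact: (cl0_loopless tr_matroid tr_loopless). Qed.

Lemma trflat_flat F : flat tr F -> flat r F.
Proof.
move=> fF; apply/eqP/eqP; rewrite eqEsubset subset_cl // andbT.
apply/subsetP => x; rewrite in_cl => /eqP hx.
rewrite -(flatE fF) in_cl; apply/eqP.
have e : cl r (x |: F) = cl r F.
  apply: cl_sandwich => //; first by apply: subsetU1.
  by rewrite subUset sub1set in_cl hx eqxx subset_cl.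
have h1 := trE (x |: F); have h2 := trE F.
rewrite e hx in h1; lia.
Qed.

Lemma tr_cover K x : flat r K -> K \notin M -> cl r (x |: K) \in M -> x \in cl tr K.
Proof.
move=> fK KM xM; rewrite in_cl; case xK: (x \in K).
  by rewrite (setUidPr (_ : [set x] \subset K)) ?sub1set.
have h1 := trE (x |: K); have h2 := trE K.
rewrite xM /= in h1; rewrite flatE // (negbTE KM) /= in h2.
rewrite (flat_add hr) ?xK // in h1.
by apply/eqP; lia.
Qed.

Lemma tr_cl_inv K x : flat r K -> x \in cl tr K -> x \notin K ->
  K \notin M /\ cl r (x |: K) \in M.
Proof.
move=> fK; rewrite in_cl => /eqP hx xK.
have h1 := trE (x |: K); have h2 := trE K.
rewrite (flatE fK) (flat_add hr) // in h1 h2.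
case b1: (cl r (x |: K) \in M); case b2: (K \in M); rewrite b1 b2 /= in h1 h2; lia.
Qed.
End Trunc.

Section Build.
Variable E : finType.
Variable r : {set E} -> nat.
Hypothesis hr : matroid_rank r.
Hypothesis hl : loopless r.
Variable Gs : {set {set E}}.
Hypothesis hG : building_set r Gs.
Variable M : {set {set E}}.
Hypothesis hM : modular_cut r M.
Hypothesis haf : atom_free r M.
Hypothesis hc : compatible Gs M.
Implicit Types (A B X Y F G H K : {set E}) (x y : E).

Lemma cl0 : cl r set0 = set0.
Proof. exact: cl0_loopless. Qed.

Lemma Gs_flat G : G \in Gs -> flat r G.
Proof. by case: hG => h _ /h []. Qed.
Lemma Gs_ne G : G \in Gs -> G != set0.
Proof. by case: hG => h _ /h []; rewrite cl0. Qed.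

Lemma hM0 : set0 \notin M.
Proof.
apply/negP => h0; have := hc h0.
have : [forall G in M, ~~ (G \proper set0)].
  by apply/forall_inP => G _; rewrite properE sub0set andbF.
by move=> h /(_ h) /Gs_ne; rewrite eqxx.
Qed.

Lemma maxbelowP (Hs : {set {set E}}) F G : reflect
  [/\ G \in Hs, G \subset F & forall G', G' \in Hs -> G' \subset F -> ~~ (G \proper G')]
  (G \in maxbelow Hs F).
Proof.
rewrite /maxbelow inE; apply: (iffP idP).
  case/and3P => h1 h2 /forall_inP h3; split => // G' h4 h5; exact: (implyP (h3 _ h4)).
case=> h1 h2 h3; rewrite h1 h2 /=; apply/forall_inP => G' h4; apply/implyP; exact: h3.
Qed.

Lemma exists_max F G : G \in Gs -> G \subset F ->
  exists2 G', G' \in maxbelow Gs F & G \subset G'.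
Proof.
move=> h1 h2.
have [G' /maxsetP [/andP [g1 g2] g3] g4] :=
  @maxset_exists _ [pred X | (X \in Gs) && (X \subset F)] G (introT andP (conj h1 h2)).
exists G' => //; apply/maxbelowP; split => // G'' h3 h4.
apply/negP => /properP [sub [z z1 z2]].
have e := g3 G'' (introT andP (conj h3 h4)) sub.
by move: z1; rewrite e (negbTE z2).
Qed.

Lemma covA F x : flat r F -> F != set0 -> x \in F ->
  exists2 G, G \in maxbelow Gs F & x \in G.
Proof.
move=> fF nF xF; case: hG => _ /(_ F fF); rewrite cl0 => /(_ nF) [_ [P2 _]].
have fx : flat r (cl r [set x]) := flat_cl hr _.
have sx : cl r [set x] \subset F by apply: in_flat_cl; rewrite ?sub1set.
have [h [hf hj]] := P2 _ fx sx.
case: (boolP [exists G in maxbelow Gs F, x \in G]) => [/exists_inP [G g1 g2] | nex].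
  by exists G.
exfalso.
have h0 : forall G, G \in maxbelow Gs F -> h G = set0.
  move=> G GM; apply/eqP; apply/negPn/negP => /set0Pn [z zG].
  have [fhG shG] := hf G GM.
  have zx : z \in cl r [set x].
    rewrite -hj /family_join; apply: (subsetP (subset_cl r _)); apply/bigcupP; by exists G.
  have : cl r [set x] \subset h G.
    apply: subset_trans (_ : cl r [set z] \subset h G).
      by apply: rk_eq_sub => //; rewrite ?sub1set // rk_cl // !hl.
    by apply: in_flat_cl => //; rewrite sub1set.
  move=> /subsetP /(_ x (subsetP (subset_cl r _) x (set11 x))) xh.
  have xG := subsetP shG x xh.
  by move/exists_inP: nex; apply; exists G.
have : family_join r (maxbelow Gs F) h = set0 by rewrite /family_join big1 ?cl0.
rewrite hj => e; have := subsetP (subset_cl r [set x]) x (set11 x).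
by rewrite e inE.
Qed.

Lemma covB F h : flat r F -> F != set0 -> family_in r (maxbelow Gs F) h ->
  forall G, G \in maxbelow Gs F ->
  cl r (\bigcup_(G' in maxbelow Gs F) h G') :&: G = h G.
Proof.
move=> fF nF hf G GM.
case: hG => _ /(_ F fF); rewrite cl0 => /(_ nF) [P1 [_ P3]].
set Mx := maxbelow Gs F; set K := cl r (\bigcup_(G' in Mx) h G').
have KF : K \subset F := P1 h hf.
pose h' := fun G' => K :&: G'.
have hf' : family_in r Mx h'.
  move=> G' G'M; split; last by apply: subsetIr.
  apply: flat_I => //; first exact: flat_cl.
  by apply: Gs_flat; case/maxbelowP: G'M.
have ej : family_join r Mx h' = K.
  rewrite /family_join.
  have -> : \bigcup_(G' in Mx) h' G' = K.
    apply/setP => y; apply/bigcupP/idP => [[G' _ ]|yK]; first by rewrite inE => /andP [].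
    have [G' G'M yG'] := covA fF nF (subsetP KF y yK).
    by exists G' => //; rewrite inE yK.
  exact: flatE (flat_cl hr _).
have s1 : h' G \subset h G.
  by apply: (P3 h' h hf' hf).1 => //; rewrite ej; exact: subxx.
apply/eqP; rewrite eqEsubset s1 /= subsetI (proj2 (hf G GM)) andbT.
apply: subset_trans (subset_cl r _).
by apply/subsetP => y yG; apply/bigcupP; exists G.
Qed.


Lemma M_min F K : flat r F -> F != set0 -> K \in M -> K \subset F ->
  exists2 G, G \in maxbelow Gs F & K :&: G \in M.
Proof.
move=> fF nF KM KF.
have [X /minsetP [/andP [XM XK] Xmin] _] :=
  @minset_exists _ [pred X | (X \in M) && (X \subset K)] K (introT andP (conj KM (subxx K))).
have XGs : X \in Gs.
  apply: (hc XM); apply/forall_inP => G GM; apply/negP => /properP [sGX [z z1 z2]].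
  have e := Xmin G (introT andP (conj GM (subset_trans sGX XK))) sGX.
  by move: z2; rewrite e z1.
have [G GM XG] := exists_max XGs (subset_trans XK KF).
exists G => //; apply: (M_up hM XM).
  apply: flat_I => //; first exact: (M_flat hM KM).
  by apply: Gs_flat; case/maxbelowP: GM.
by rewrite subsetI XK XG.
Qed.

Notation tr := (trunc r M).
Let hM0' := hM0.
Let trm : matroid_rank tr := tr_matroid hr hl hM hM0'.

Lemma core F h : flat tr F -> F != set0 ->
  (forall G, G \in maxbelow Gs F -> [/\ flat r (h G), h G \subset G &
       forall x, x \in G -> x \in cl tr (h G) -> x \in h G]) ->
  flat tr (\bigcup_(G in maxbelow Gs F) h G).
Proof.
move=> ftF nF hh.
have fF := trflat_flat hr hl hM0' ftF.
set Mx := maxbelow Gs F; set K := \bigcup_(G in Mx) h G.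
have hf : family_in r Mx h by move=> G GM; case: (hh G GM).
have KF : K \subset F.
  apply/bigcupsP => G GM; case: (hh G GM) => _ s _.
  by apply: subset_trans s _; case/maxbelowP: GM.
have hK : forall G, G \in Mx -> h G \subset K.
  by move=> G GM; apply/subsetP => y yG; apply/bigcupP; exists G.
have fK : flat r K.
  apply/eqP; apply/eqP; rewrite eqEsubset subset_cl andbT; apply/subsetP => y yK.
  have yF := subsetP (in_flat_cl hr fF KF) y yK.
  have [G GM yG] := covA fF nF yF.
  have e := covB fF nF hf GM.
  have yh : y \in h G by rewrite -e inE yK yG.
  by apply/bigcupP; exists G.
apply/eqP/eqP; rewrite eqEsubset subset_cl andbT; apply/subsetP => x xK.
apply/negPn/negP => xnK.
have [KnM K'M] := tr_cl_inv hr hl hM0' fK xK xnK.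
set K' := cl r (x |: K) in K'M.
have KinM : forall G, G \in Mx -> h G \in M -> False.
  move=> G GM hGM; have := M_up hM hGM fK (hK G GM).
  by rewrite (negbTE KnM).
have xK' : x \in K' by apply: (subsetP (subset_cl r _)); rewrite setU11.
have KK' : K \subset K' by apply: subset_trans (subset_cl r _); apply: subsetU1.
case xF: (x \in F).
- have [G GM xG] := covA fF nF xF.
  pose h' := fun G' => if G' == G then cl r (x |: h G) else h G'.
  have hGh' : forall G', h G' \subset h' G'.
    move=> G'; rewrite /h'; case: eqP => [->|_] //.
    by apply: subset_trans (subset_cl r _); apply: subsetU1.
  have hf' : family_in r Mx h'.
    move=> G' G'M; rewrite /h'; case: eqP => [->|_]; last exact: hf.
    split; first exact: flat_cl.
    apply: in_flat_cl => //; first by apply: Gs_flat; case/maxbelowP: GM.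
    by rewrite subUset sub1set xG (proj2 (hf G GM)).
  have ej : cl r (\bigcup_(G' in Mx) h' G') = K'.
    apply: cl_sandwich => //.
      rewrite subUset sub1set; apply/andP; split.
        apply/bigcupP; exists G => //; rewrite /h' eqxx.
        by apply: (subsetP (subset_cl r _)); rewrite setU11.
      apply/bigcupsP => G' G'M; apply: subset_trans (hGh' G') _.
      by apply/subsetP => y yG; apply/bigcupP; exists G'.
    apply/bigcupsP => G' G'M; rewrite /h'; case: eqP => _.
      by apply: cl_mono => //; apply: setUS; apply: hK.
    apply: subset_trans (subset_cl r _); apply: subset_trans (subsetU1 x K).
    exact: hK.
  have K'F : K' \subset F by apply: in_flat_cl => //; rewrite subUset sub1set xF KF.
  have [Gl GlM GlIn] := M_min fF nF K'M K'F.
  have e := covB fF nF hf' GlM; rewrite ej in e; rewrite e in GlIn.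
  move: GlIn; rewrite /h'; case: eqP => [eG | neG] hIn; last exact: (KinM Gl GlM hIn).
  have hGnM : h G \notin M by apply/negP => /(KinM G GM).
  have := tr_cover hr hl hM0' (proj1 (hf G GM)) hGnM hIn.
  case: (hh G GM) => _ _ /(_ x xG) h3 /h3 xhG.
  by move: xnK; rewrite (subsetP (hK G GM) x xhG).
- case FM: (F \in M).
  + have rK' : r K' = (r K).+1.
      by rewrite /K' (rk_cl hr) (flat_add hr fK xnK).
    have e1 : K' :&: F = K.
      apply/eqP; rewrite eqEsubset; apply/andP; split; last by rewrite subsetI KF KK'.
      apply/subsetP => y /setIP [yK' yF]; apply/negPn/negP => ynK.
      have ry : r (y |: K) = (r K).+1 := flat_add hr fK ynK.
      have s1 : y |: K \subset K' :&: F.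
        by rewrite subUset sub1set inE yK' yF subsetI KK' KF.
      have fI : flat r (K' :&: F) by apply: flat_I => //; apply: flat_cl.
      have : K' \subset K' :&: F.
        rewrite -(flatE fI); apply: rk_eq_sub => //; first exact: subsetIl.
        apply/eqP; rewrite eqn_leq (rk_mono hr (subsetIl _ _)) /= rK' -ry.
        exact: rk_mono.
      by move/subsetP/(_ x xK'); rewrite inE xF andbF.
    have : K \in M.
      rewrite -e1; apply: (M_mod hM K'M FM).
      have s2 : x |: F \subset K' :|: F.
        by rewrite subUset sub1set inE xK' subsetUr.
      have s3 : K' :|: F \subset cl r (x |: F).
        rewrite subUset; apply/andP; split; first by apply: cl_mono => //; apply: setUS.
        by apply: subset_trans (subset_cl r _); apply: subsetU1.
      have r1 := rk_mono hr s2; have r2 := rk_mono hr s3.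
      rewrite (rk_cl hr) in r2.
      have r3 : r (x |: F) = (r F).+1 by apply: (flat_add hr fF); rewrite xF.
      have r4 : r (cl r (K' :|: F)) = r (K' :|: F) := rk_cl hr _.
      rewrite r4 e1 rK'; move: r1 r2 r3; clear; lia.
    by rewrite (negbTE KnM).
  + have h1 : cl r (x |: F) \in M.
      apply: (M_up hM K'M (flat_cl hr _)); by apply: cl_mono => //; apply: setUS.
    have := tr_cover hr hl hM0' fF (negbT FM) h1.
    by rewrite (flatE ftF) xF.
Qed.


Let trl : loopless tr := tr_loopless hr hl haf hM0'.
Let ctr0 : cl tr set0 = set0 := cl0_loopless trm trl.

Lemma Mx_trflat F G : flat tr F -> F != set0 -> G \in maxbelow Gs F -> flat tr G.
Proof.
move=> ftF nF GM.
have := @core F (fun G' => if G' == G then G else set0) ftF nF.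
have -> : \bigcup_(G' in maxbelow Gs F) (if G' == G then G else set0) = G.
  apply/setP => y; apply/bigcupP/idP => [[G' _]|yG]; last by exists G; rewrite ?eqxx.
  by case: eqP => // _; rewrite inE.
apply=> G' G'M; case: eqP => [->|_].
  split => //; by apply: Gs_flat; case/maxbelowP: GM.
split; [by rewrite /flat cl0 | exact: sub0set | by move=> x _; rewrite ctr0].
Qed.

Lemma maxbelow_tr F : flat tr F -> F != set0 ->
  maxbelow (trunc_set r M Gs) F = maxbelow Gs F.
Proof.
move=> ftF nF; apply/setP => G; apply/maxbelowP/maxbelowP.
  case; rewrite inE => /andP [GGs fG] GF Gmax.
  have [G' G'M GG'] := exists_max GGs GF.
  have G'tr : G' \in trunc_set r M Gs.
    rewrite inE (Mx_trflat ftF nF G'M) andbT; by case/maxbelowP: G'M.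
  have G'F : G' \subset F by case/maxbelowP: G'M.
  have := Gmax G' G'tr G'F; rewrite properE GG' /= negbK => G'G.
  have -> : G = G' by apply/eqP; rewrite eqEsubset GG' G'G.
  by case/maxbelowP: G'M.
case=> GGs GF Gmax; split => //.
  by rewrite inE GGs (Mx_trflat ftF nF (introT (maxbelowP _ _ _) (And3 GGs GF Gmax))).
by move=> G' ; rewrite inE => /andP [G'Gs _]; apply: Gmax.
Qed.

Lemma part2 : building_set tr (trunc_set r M Gs).
Proof.
split.
  move=> G; rewrite inE => /andP [GGs fG]; split => //; rewrite ctr0; exact: Gs_ne.
move=> F ftF; rewrite ctr0 => nF /=.
have fF := trflat_flat hr hl hM0' ftF.
rewrite (maxbelow_tr ftF nF).
set Mx := maxbelow Gs F.
have hcore : forall h, family_in tr Mx h ->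
    family_in r Mx h /\ family_join tr Mx h = \bigcup_(G in Mx) h G.
  move=> h hf; split.
    by move=> G GM; case: (hf G GM) => a b; split => //; exact: (trflat_flat hr hl hM0' a).
  apply: flatE; apply: core => // G GM; case: (hf G GM) => a b; split => //.
    exact: (trflat_flat hr hl hM0' a).
  by move=> x _; rewrite (flatE a).
split.
  move=> h hf; apply: in_flat_cl => //; apply/bigcupsP => G GM.
  by apply: subset_trans (proj2 (hf G GM)) _; case/maxbelowP: GM.
split.
  move=> H fH sHF; exists (fun G => H :&: G); split.
    move=> G GM; split; last exact: subsetIr.
    by apply: flat_I => //; apply: (Mx_trflat ftF nF GM).
  rewrite /family_join.
  have -> : \bigcup_(G in Mx) (H :&: G) = H.
    apply/setP => y; apply/bigcupP/idP => [[G' _]|yH]; first by rewrite inE => /andP [].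
    have [G GM yG] := covA fF nF (subsetP sHF y yH).
    by exists G => //; rewrite inE yH yG.
  exact: flatE.
move=> h h' hf hf'; split.
  have [hfr ej] := hcore h hf; have [hfr' ej'] := hcore h' hf'.
  rewrite ej ej' => sub G GM.
  rewrite -(covB fF nF hfr' GM) subsetI (proj2 (hf G GM)) andbT.
  apply: subset_trans (subset_cl r _); apply: subset_trans sub.
  by apply/subsetP => y yG; apply/bigcupP; exists G.
move=> hle; apply: cl_mono => //; apply/bigcupsP => G GM.
apply: subset_trans (hle G GM) _.
by apply/subsetP => y yG; apply/bigcupP; exists G.
Qed.


Notation unS S := [set x | Some x \in S].

Lemma ext_unS_cl (S : {set option E}) :
  unS (cl (ext r M) (None |: S)) = cl tr (unS S).
Proof.
apply/setP => x; rewrite !inE /ext.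
have e1 : [set y | Some y \in Some x |: (None |: S)] = x |: unS S.
  by apply/setP => y; rewrite !inE.
have e2 : [set y | Some y \in None |: S] = unS S.
  by apply/setP => y; rewrite !inE.
rewrite e1 e2 !inE eqxx /= ?orbT.
have h1 := trE hr hl hM0' (x |: unS S); have h2 := trE hr hl hM0' (unS S).
move: h1 h2.
case: (cl r (x |: unS S) \in M); case: (cl r (unS S) \in M) => /= h2 h1;
  apply/eqP/eqP; lia.
Qed.

Lemma unS_Some G : unS (cl (ext r M) (Some @: G)) = cl r G.
Proof.
apply/setP => x; rewrite !inE /ext.
have e1 : [set y | Some y \in Some x |: (Some @: G)] = x |: G.
  by apply/setP => y; rewrite !inE (mem_imset _ _ (@Some_inj _)).
have e2 : [set y | Some y \in Some @: G] = G.
  by apply/setP => y; rewrite !inE (mem_imset _ _ (@Some_inj _)).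
have n1 : None \in Some @: G = false.
  by apply/negP => /imsetP [y _].
by rewrite e1 e2 !inE n1 /= !addn0.
Qed.

Lemma part1 : trunc_set r M Gs = contr_set (ext r M) (ext_set r M Gs).
Proof.
have c0 : unS (cl (ext r M) [set None]) = set0.
  rewrite -[[set None]]setU0 ext_unS_cl.
  have -> : unS (set0 : {set option E}) = set0 by apply/setP => y; rewrite !inE.
  exact: ctr0.
apply/setP => X; apply/idP/idP.
- rewrite inE => /andP [XG fX].
  apply/imsetP; exists (cl (ext r M) (None |: cl (ext r M) (Some @: X))).
    rewrite inE; apply/andP; split.
      apply/imsetP; exists (cl (ext r M) (Some @: X)) => //.
      rewrite /ext_set inE; apply/orP; left; apply/imsetP; by exists X.
    apply/negP => /eqP e; have := congr1 (fun S : {set option E} => unS S) e.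
    rewrite /= ext_unS_cl unS_Some (flatE (Gs_flat XG)) (flatE fX) c0 => eX.
    by move: (Gs_ne XG); rewrite eX eqxx.
  by rewrite ext_unS_cl unS_Some (flatE (Gs_flat XG)) (flatE fX).
- case/imsetP => H; rewrite inE => /andP [/imsetP [G' G'in ->] Hne] ->.
  rewrite ext_unS_cl.
  move: G'in Hne; rewrite /ext_set inE => /orP [/imsetP [G GGs ->] | /set1P ->] Hne;
    last by rewrite setUid eqxx in Hne.
  rewrite unS_Some (flatE (Gs_flat GGs)).
  have ftF : flat tr (cl tr G) := flat_cl trm G.
  have GF : G \subset cl tr G := subset_cl tr G.
  have nF : cl tr G != set0.
    apply: contraNneq (Gs_ne GGs) => e; by rewrite -subset0 -e GF.
  have [G2 G'M GG'] := exists_max GGs GF.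
  have G'F : G2 \subset cl tr G by case/maxbelowP: G'M.
  have FG' : cl tr G \subset G2 := in_flat_cl trm (Mx_trflat ftF nF G'M) GG'.
  have -> : cl tr G = G2 by apply/eqP; rewrite eqEsubset FG' G'F.
  rewrite inE (Mx_trflat ftF nF G'M) andbT; by case/maxbelowP: G'M.
Qed.

End Build.

Unset Implicit Arguments.
Set Strict Implicit.

Theorem lemma2p33 (E : finType) (r : {set E} -> nat)
  (hr : matroid_rank r) (hl : loopless r)
  (Gs : {set {set E}}) (hG : building_set r Gs)
  (M : {set {set E}}) (hM : modular_cut r M) (haf : atom_free r M)
  (hc : compatible Gs M) :
  trunc_set r M Gs = contr_set (ext r M) (ext_set r M Gs)
  /\ building_set (trunc r M) (trunc_set r M Gs).
Proof.
split; [exact: part1 | exact: part2].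
Qed.
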